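(* Let $s>0$, $0\le r\le 1/4$, and $d:=s(2+s)$. Let $Z$ be a nonnegative random variable satisfying $Z\ge 2rs$ and $\mathbb{E}[Z]\le 2rs+r^2s^2$. Define $F(u):=\min\{1,48u^2\}$ for $u\ge0$. Then \[ \mathbb{E}\left[F\left(\frac{Z}{d}\right)\right]\le 48r^2. \] *)

(* Defs.v *)
From HB Require Import structures.
From mathcomp Require Import all_boot all_order all_algebra.
From mathcomp Require Import all_classical all_reals all_analysis.
Set Implicit Arguments. Unset Strict Implicit. Unset Printing Implicit Defensive.
Import Order.TTheory GRing.Theory Num.Theory.
Local Open Scope ring_scope.

Definition Fcap {R : realType} (u : R) : R := Order.min 1 (48 * u ^+ 2).

(* Main.v *)
Require Import Defs.
From HB Require Import structures.
From mathcomp Require Import all_boot all_order all_algebra.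
From mathcomp Require Import all_classical all_reals all_analysis.
From mathcomp Require Import ring lra.
From mathcomp Require Import measurable_realfun.
Import Order.TTheory GRing.Theory Num.Theory.
Local Open Scope ring_scope.

Lemma Fcap_lin (R : realType) (a u : R) : 0 <= a -> a <= u ->
  Fcap u <= 48 * a ^+ 2 + 48 * (6^-1 + a) * (u - a).
Proof.
move=> a0 au; rewrite /Fcap.
have [u6|u6] := leP u (6^-1).
  by rewrite ge_min; apply/orP; right; nra.
by rewrite ge_min; apply/orP; left; nra.
Qed.

Lemma arith (R : realType) (s r : R) : 0 < s -> 0 <= r -> r <= 4^-1 ->
  48 * (2 * r * s / (s * (2 + s))) ^+ 2 +
  48 * (6^-1 + 2 * r * s / (s * (2 + s))) * (r ^+ 2 * s ^+ 2 / (s * (2 + s)))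
  <= 48 * r ^+ 2.
Proof.
move=> s0 r0 r4.
have t0 : 0 < 2 + s by lra.
have -> : 2 * r * s / (s * (2 + s)) = 2 * r / (2 + s).
  by field; apply/andP; split; apply: lt0r_neq0.
have -> : r ^+ 2 * s ^+ 2 / (s * (2 + s)) = r ^+ 2 * s / (2 + s).
  by field; apply/andP; split; apply: lt0r_neq0.
set t := 2 + s.
have key : 4 + (t / 6 + 2 * r) * (t - 2) <= t ^+ 2 by rewrite /t; nra.
have it0 : 0 < t^-1 by rewrite invr_gt0.
have e : 48 * (2 * r / t) ^+ 2 + 48 * (6^-1 + 2 * r / t) * (r ^+ 2 * s / t)
   = 48 * r ^+ 2 * (4 + (t / 6 + 2 * r) * (t - 2)) / t ^+ 2.
  rewrite /t; field; apply: lt0r_neq0; rewrite /t in t0; lra.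
rewrite e ler_pdivrMr ?exprn_gt0 //.
have r20 : 0 <= r ^+ 2 by nra.
have := ler_wpM2l (_ : 0 <= 48 * r ^+ 2) key; rewrite mulrA; apply; nra.
Qed.

Theorem lemmaA1 (R : realType) (dT : measure_display) (T : measurableType dT)
  (P : probability T R) (Z : {RV P >-> R}) (s r : R) :
  0 < s -> 0 <= r -> r <= 4^-1 ->
  {ae P, forall w, 0 <= Z w} ->
  {ae P, forall w, 2 * r * s <= Z w} ->
  ('E_P[Z] <= (2 * r * s + r ^+ 2 * s ^+ 2)%:E)%E ->
  ('E_P[fun w => Fcap (Z w / (s * (2 + s)))] <= (48 * r ^+ 2)%:E)%E.
Proof.
move=> s0 r0 r4 _ HZ HE.
set d := s * (2 + s).
have d0 : 0 < d by rewrite /d mulr_gt0 //; lra.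
set a := 2 * r * s / d.
have a0 : 0 <= a by rewrite /a divr_ge0 //; [nra | exact: ltW].
set B := 48 * (6^-1 + a).
have B0 : 0 <= B by rewrite /B; lra.
set Y := fun w => Num.max (Z w) (2 * r * s).
have mZ : measurable_fun setT Z by exact: measurable_funP.
have mY : measurable_fun setT Y.
  exact: measurable_realfun.measurable_maxr mZ (measurable_cst _).
set G := fun w => 48 * a ^+ 2 + B / d * (Y w - 2 * r * s).
have Y2 : forall w, 0 <= Y w - 2 * r * s.
  by move=> w; rewrite subr_ge0 /Y le_max lexx orbT.
have mG : measurable_fun setT G.
  apply: measurable_realfun.measurable_funD; first exact: measurable_cst.
  apply: measurable_realfun.measurable_funM; first exact: measurable_cst.
  by apply: measurable_realfun.measurable_funB => //; exact: measurable_cst.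
have G0 : forall w, 0 <= G w.
  move=> w; rewrite /G addr_ge0 //; first by rewrite mulr_ge0 // sqr_ge0.
  by rewrite mulr_ge0 // divr_ge0 // ltW.
have mF : measurable_fun setT (fun w => Fcap (Z w / d)).
  rewrite /Fcap.
  apply: (measurable_realfun.measurable_minr (measurable_cst _) _).
  apply: measurable_realfun.measurable_funM; first exact: measurable_cst.
  apply: measurable_realfun.measurable_funX; apply: measurable_realfun.measurable_funM => //; exact: measurable_cst.
have F0 : forall w, 0 <= Fcap (Z w / d).
  move=> w; rewrite /Fcap le_min ler01 /=; apply: mulr_ge0 => //; exact: sqr_ge0.
have step1 : ('E_P[fun w => Fcap (Z w / d)] <= 'E_P[G])%E.
  apply: expectation_le => //.
  apply: filterS HZ => w hw.
  have -> : G w = 48 * a ^+ 2 + 48 * (6^-1 + a) * (Z w / d - a).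
    rewrite /G /Y max_l // /B /a.
    ring.
  apply: (@Fcap_lin R a (Z w / d) a0).
  rewrite /a ler_pM2r //; rewrite invr_gt0 //.
have mYE : measurable_fun [set: T] (EFin \o (fun w => Y w - 2 * r * s)).
  apply/measurable_EFinP; apply: measurable_realfun.measurable_funB => //.
set I := (\int[P]_w (Y w - 2 * r * s)%:E)%E.
have I0 : (0 <= I)%E by apply: integral_ge0 => w _; rewrite lee_fin.
have EY : ('E_P[Y] = I + (2 * r * s)%:E)%E.
  rewrite unlock.
  transitivity (\int[P]_w ((Y w - 2 * r * s)%:E + (cst (2 * r * s)%:E) w))%E.
    by apply: eq_integral => w _; rewrite /= -EFinD subrK.
  rewrite ge0_integralD //; last first.
  - by move=> w _; rewrite lee_fin; nra.
  - by move=> w _; rewrite lee_fin.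
  have ->: (\int[P]_x (cst (2 * r * s)%:E) x = (2 * r * s)%:E)%E.
    by have := expectation_cst P (2 * r * s); rewrite unlock.
  by [].
have EZ : ('E_P[Z] = 'E_P[Y])%E.
  rewrite unlock; apply: ae_eq_integral => //.
  - exact/measurable_EFinP.
  - exact/measurable_EFinP.
  apply: filterS HZ => w hw _; by rewrite /Y max_l.
have EG : ('E_P[G] = (48 * a ^+ 2)%:E + (B / d)%:E * I)%E.
  rewrite unlock.
  transitivity (\int[P]_w ((cst (48 * a ^+ 2)%:E) w + (B / d)%:E * (Y w - 2 * r * s)%:E))%E.
    by apply: eq_integral => w _; rewrite /= -EFinM -EFinD.
  rewrite ge0_integralD //; last first.
  - exact: measurable_funeM.
  - by move=> w _; rewrite mule_ge0 // lee_fin // divr_ge0 // ltW.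
  - by move=> w _; rewrite lee_fin mulr_ge0 // sqr_ge0.
  have ->: (\int[P]_x (cst (48 * a ^+ 2)%:E) x = (48 * a ^+ 2)%:E)%E.
    by have := expectation_cst P (48 * a ^+ 2); rewrite unlock.
  rewrite ge0_integralZl_EFin //.
  - by move=> w _; rewrite lee_fin.
  by rewrite divr_ge0 // ltW.
have HI : (I <= (r ^+ 2 * s ^+ 2)%:E)%E.
  move: HE; rewrite EZ EY addrC EFinD.
  rewrite leeD2lE //.
have H2 : ((48 * a ^+ 2)%:E + (B / d)%:E * I <=
    (48 * a ^+ 2)%:E + (B / d)%:E * (r ^+ 2 * s ^+ 2)%:E)%E.
  rewrite leeD2lE //; apply: lee_wpmul2l => //.
  by rewrite lee_fin divr_ge0 // ltW.
have H3 : ((48 * a ^+ 2)%:E + (B / d)%:E * (r ^+ 2 * s ^+ 2)%:E <= (48 * r ^+ 2)%:E)%E.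
  rewrite -EFinM -EFinD lee_fin.
  have -> : 48 * a ^+ 2 + B / d * (r ^+ 2 * s ^+ 2) =
     48 * a ^+ 2 + 48 * (6^-1 + a) * (r ^+ 2 * s ^+ 2 / d).
    by rewrite /B; field; exact: lt0r_neq0.
  rewrite /a /d; exact: arith s0 r0 r4.
rewrite EG in step1.
exact: le_trans step1 (le_trans H2 H3).
Qed.
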